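(* Let $A\in\mathbb{R}^{n\times n}$ be Hurwitz, $B\in\mathbb{R}^{n\times m}$, $C\in\mathbb{R}^{m\times n}$, $D\in\mathbb{R}^{m\times m}$ with $\|D\|<1$, and consider the system $\Sigma:\ \dot{\mathbf{x}}(t)=A\mathbf{x}(t)+B\,\Phi\circ(I-D\Phi)^{-1}(C\mathbf{x}(t))$. Then the equilibrium $x=0$ of $\Sigma$ is globally asymptotically stable if and only if it is locally asymptotically stable.
   Context: $\|D\|$ is the spectral norm. $\Phi:\mathbb{R}^m\to\mathbb{R}^m$ is the componentwise ReLU, $\Phi(q)_i=\max(q_i,0)$. For $\|D\|<1$ the map $q\mapsto q-D\Phi(q)$ is a bijection of $\mathbb{R}^m$, and $(I-D\Phi)^{-1}$ denotes its inverse; $\Sigma$ is the closed loop of $\dot{\mathbf{x}}=A\mathbf{x}+B\mathbf{w}$, $\mathbf{z}=C\mathbf{x}+D\mathbf{w}$, $\mathbf{w}=\Phi(\mathbf{z})$. Stability notions: (i) for each $\varepsilon>0$ there is $\delta>0$ with $\|\mathbf{x}(0)\|<\delta\Rightarrow\|\mathbf{x}(t)\|<\varepsilon$ for all $t\geq0$; (ii) there is $\delta>0$ with $\|\mathbf{x}(0)\|<\delta\Rightarrow\lim_{t\to\infty}\mathbf{x}(t)=0$; (iii) $\lim_{t\to\infty}\mathbf{x}(t)=0$ for every initial state $\mathbf{x}(0)$. The origin is locally asymptotically stable if (i) and (ii) hold, and globally asymptotically stable if (i) and (iii) hold. *)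

(* Defs.v *)
From HB Require Import structures.
From mathcomp Require Import all_boot all_order all_algebra.
From mathcomp Require Import all_classical all_reals all_analysis.
From mathcomp Require Import complex.
Set Implicit Arguments. Unset Strict Implicit. Unset Printing Implicit Defensive.
Import Order.TTheory GRing.Theory Num.Theory.
Import numFieldNormedType.Exports.
Local Open Scope classical_set_scope.
Local Open Scope ring_scope.

Section Defs.
Variable R : realType.

Definition enorm (k : nat) (v : 'cV[R]_k) : R :=
  Num.sqrt (\sum_(i < k) v i 0 ^+ 2).

Definition spectral_norm (p q : nat) (D : 'M[R]_(p, q)) : R :=
  sup [set enorm (D *m v) | v in [set v : 'cV[R]_q | enorm v <= 1]].

Definition hurwitz (n : nat) (A : 'M[R]_n) : Prop :=
  forall lam : R[i], eigenvalue (map_mx (fun a : R => Complex a 0) A) lam ->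
    complex.Re lam < 0.

Definition Phi (m : nat) (q : 'cV[R]_m) : 'cV[R]_m :=
  map_mx (fun a => Num.max a 0) q.

(* (I - D Phi)^{-1}: the inverse of q |-> q - D Phi(q) (a bijection when ||D||<1) *)
Definition inv_IDPhi (m : nat) (D : 'M[R]_m) (y : 'cV[R]_m) : 'cV[R]_m :=
  get [set q : 'cV[R]_m | q - D *m Phi q = y].

Definition sigma_field (n m : nat) (A : 'M[R]_n) (B : 'M[R]_(n, m))
  (C : 'M[R]_(m, n)) (D : 'M[R]_m) (x : 'cV[R]_n) : 'cV[R]_n :=
  A *m x + B *m Phi (inv_IDPhi D (C *m x)).

Definition is_solution (n m : nat) (A : 'M[R]_n) (B : 'M[R]_(n, m))
  (C : 'M[R]_(m, n)) (D : 'M[R]_m) (x : R -> 'cV[R]_n) : Prop :=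
  {within `[0, +oo[, continuous x} /\
  forall t : R, 0 < t -> is_derive t 1 x (sigma_field A B C D (x t)).

Definition lyap_stable n m A B C D : Prop :=
  forall eps : R, 0 < eps -> exists2 delta : R, 0 < delta &
    forall x, @is_solution n m A B C D x -> enorm (x 0) < delta ->
      forall t : R, 0 <= t -> enorm (x t) < eps.

Definition locally_attractive n m A B C D : Prop :=
  exists2 delta : R, 0 < delta &
    forall x, @is_solution n m A B C D x -> enorm (x 0) < delta ->
      x t @[t --> +oo] --> (0 : 'cV[R]_n).

Definition globally_attractive n m A B C D : Prop :=
  forall x, @is_solution n m A B C D x -> x t @[t --> +oo] --> (0 : 'cV[R]_n).

Definition LAS n m A B C D : Prop :=
  @lyap_stable n m A B C D /\ @locally_attractive n m A B C D.

Definition GAS n m A B C D : Prop :=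
  @lyap_stable n m A B C D /\ @globally_attractive n m A B C D.

End Defs.

(* Main.v *)
Require Import Defs.
From HB Require Import structures.
From mathcomp Require Import all_boot all_order all_algebra.
From mathcomp Require Import all_classical all_reals all_analysis.
From mathcomp Require Import complex.
From mathcomp Require Import lra.
Import Order.TTheory GRing.Theory Num.Theory.
Local Open Scope ring_scope.

Section Aux.
Variable R : realType.

Lemma enorm_ge0 k (v : 'cV[R]_k) : 0 <= enorm v.
Proof. exact: sqrtr_ge0. Qed.

Lemma enorm_le k (u : 'cV[R]_k) (K : 'I_k -> R) :
  (forall i, `|u i 0| <= K i) -> enorm u <= Num.sqrt (\sum_(i < k) K i ^+ 2).
Proof.
move=> H; rewrite /enorm ler_sqrt; last first.
  by apply: sumr_ge0 => i _; rewrite sqr_ge0.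
apply: ler_sum => i _; have := H i; rewrite ler_norml => /andP[h1 h2].
have h0 : 0 <= K i by move: (H i); apply: le_trans.
nra.
Qed.

Lemma coord_le k (u : 'cV[R]_k) i : `|u i 0| <= enorm u.
Proof.
rewrite -sqrtr_sqr /enorm ler_sqrt; last first.
  by apply: sumr_ge0 => j _; rewrite sqr_ge0.
rewrite (bigD1 i) //= lerDl; by apply: sumr_ge0 => j _; rewrite sqr_ge0.
Qed.

Lemma enormZ k (c : R) (v : 'cV[R]_k) : enorm (c *: v) = `|c| * enorm v.
Proof.
rewrite /enorm -sqrtr_sqr -sqrtrM ?sqr_ge0 //; congr Num.sqrt.
rewrite mulr_sumr; apply: eq_bigr => i _; rewrite mxE; by rewrite exprMn.
Qed.

Lemma enorm_eq0 k (v : 'cV[R]_k) : enorm v = 0 -> v = 0.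
Proof.
rewrite /enorm => /eqP; rewrite sqrtr_eq0 => H.
have H0 : \sum_(i < k) v i 0 ^+ 2 = 0.
  apply/eqP; rewrite eq_le H /=; by apply: sumr_ge0 => j _; rewrite sqr_ge0.
apply/matrixP => i j; rewrite (ord1 j) mxE.
have /psumr_eq0P P := H0; have := P (fun j _ => sqr_ge0 (v j 0)) i isT.
by move/eqP; rewrite sqrf_eq0 => /eqP.
Qed.

Lemma enorm0 k : enorm (0 : 'cV[R]_k) = 0.
Proof.
by rewrite /enorm big1 ?sqrtr0 // => i _; rewrite mxE expr0n.
Qed.

Lemma maxLip (a b : R) : `|Num.max a 0 - Num.max b 0| <= `|a - b|.
Proof.
case: (lerP 0 (a - b)) => hab; [rewrite (ger0_norm hab)|rewrite (ltr0_norm hab)];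
rewrite /Num.max; do 2 (case: ifPn => ?); rewrite ler_norml; apply/andP; split; lra.
Qed.

Lemma PhiLip k (q q' : 'cV[R]_k) : enorm (Phi q - Phi q') <= enorm (q - q').
Proof.
apply: le_trans (@enorm_le _ _ (fun i => `|(q - q') i 0|) _) _.
  by move=> i; rewrite !mxE; apply: maxLip.
by rewrite /enorm le_eqVlt; apply/orP; left; apply/eqP; congr Num.sqrt;
  apply: eq_bigr => i _; rewrite real_normK ?num_real.
Qed.

Lemma PhiZ k (c : R) (q : 'cV[R]_k) : 0 <= c -> Phi (c *: q) = c *: Phi q.
Proof.
move=> hc; apply/matrixP => i j; rewrite !mxE maxr_pMr //; by rewrite mulr0.
Qed.

Lemma spec_has_sup p q (D : 'M[R]_(p, q)) :
  has_sup [set enorm (D *m v) | v in [set v : 'cV[R]_q | enorm v <= 1]].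
Proof.
split.
  by exists (enorm (D *m 0)); exists 0 => //=; rewrite enorm0 ler01.
exists (Num.sqrt (\sum_(i < p) (\sum_(j < q) `|D i j|) ^+ 2)).
move=> _ [v /= hv <-]; apply: enorm_le => i; rewrite mxE.
apply: le_trans (ler_norm_sum _ _ _) _; apply: ler_sum => j _ /=.
rewrite normrM -[X in _ <= X]mulr1; apply: ler_wpM2l => //.
by apply: le_trans (coord_le _ v j) hv.
Qed.

Lemma Dbound p q (D : 'M[R]_(p, q)) v :
  enorm (D *m v) <= spectral_norm D * enorm v.
Proof.
have [->|v0] := eqVneq v 0.
  by rewrite mulmx0 !enorm0 mulr0.
have e0 : 0 < enorm v.
  rewrite lt_def enorm_ge0 andbT; apply/eqP => /enorm_eq0; exact/eqP.
set w := (enorm v)^-1 *: v.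
have hw : enorm w = 1.
  by rewrite enormZ ger0_norm ?invr_ge0 ?enorm_ge0 // mulVf // gt_eqF.
have := sup_upper_bound (@spec_has_sup _ _ D) (x := enorm (D *m w)).
rewrite /spectral_norm => /(_ _)/wrap[]; first by exists w => //=; rewrite hw.
rewrite /w -scalemxAr enormZ ger0_norm ?invr_ge0 ?enorm_ge0 //.
by rewrite ler_pdivrMl // mulrC.
Qed.

Lemma spec_ge0 p q (D : 'M[R]_(p, q)) : 0 <= spectral_norm D.
Proof.
have h := sup_upper_bound (@spec_has_sup _ _ D) (x := enorm (D *m 0)).
have -> : (0:R) = enorm (D *m (0:'cV_q)) by rewrite mulmx0 enorm0.
apply: h; exists 0 => //=; by rewrite enorm0 ?ler01.
Qed.

Lemma IDPhi_inj m (D : 'M[R]_m) q q' : spectral_norm D < 1 ->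
  q - D *m Phi q = q' - D *m Phi q' -> q = q'.
Proof.
move=> hs H.
have E : q - q' = D *m (Phi q - Phi q').
  rewrite mulmxBr; apply/eqP; rewrite subr_eq -addrA addrC -subr_eq H.
  by rewrite addrC.
have h1 := Dbound _ _ D (Phi q - Phi q').
have h2 := PhiLip _ q q'.
have h3 := spec_ge0 _ _ D.
have h4 := enorm_ge0 _ (q - q').
rewrite -E in h1.
have : enorm (q - q') = 0.
  apply/eqP; rewrite eq_le h4 andbT.
  have h5 : spectral_norm D * enorm (Phi q - Phi q') <= spectral_norm D * enorm (q - q').
    by apply: ler_wpM2l.
  nra.
by move/enorm_eq0/eqP; rewrite subr_eq0 => /eqP.
Qed.
End Aux.
Section Main.
Variable R : realType.
Local Open Scope classical_set_scope.

Lemma invZ m (D : 'M[R]_m) (c : R) y : spectral_norm D < 1 -> 0 < c ->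
  inv_IDPhi D (c *: y) = c *: inv_IDPhi D y.
Proof.
move=> hs hc.
have hc0 : 0 <= c by apply: ltW.
case: (pselect (exists q : 'cV[R]_m, q - D *m Phi q = y)) => [ex|nex].
  have P : inv_IDPhi D y - D *m Phi (inv_IDPhi D y) = y.
    change ([set q | q - D *m Phi q = y] (inv_IDPhi D y)).
    rewrite /inv_IDPhi; apply: xgetPex; exact: ex.
  rewrite {1}/inv_IDPhi; apply: xget_unique.
    by rewrite /= PhiZ // -scalemxAr -scalerBr P.
  move=> z /= Hz. apply: (IDPhi_inj _ _ _ _ _ hs); rewrite Hz PhiZ // -scalemxAr -scalerBr.
  by rewrite P.
have N1 : forall q : 'cV[R]_m, ~ (q - D *m Phi q = y).
  by move=> q Hq; apply: nex; exists q.
have N2 : forall q : 'cV[R]_m, ~ (q - D *m Phi q = c *: y).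
  move=> q Hq; apply: nex; exists (c^-1 *: q).
  rewrite PhiZ ?invr_ge0 // -scalemxAr -scalerBr Hq scalerA mulVf ?scale1r //.
  by rewrite gt_eqF.
rewrite /inv_IDPhi (xgetPN _ N1) (xgetPN _ N2).
by apply/matrixP => i j; rewrite !mxE mulr0.
Qed.
End Main.
Section Main2.
Variable R : realType.
Local Open Scope classical_set_scope.

Lemma fieldZ n m (A : 'M[R]_n) B C (D : 'M[R]_m) (c : R) x :
  spectral_norm D < 1 -> 0 < c ->
  sigma_field A B C D (c *: x) = c *: sigma_field A B C D x.
Proof.
move=> hs hc; rewrite /sigma_field -!scalemxAr invZ // PhiZ ?ltW //.
by rewrite -scalemxAr scalerDr.
Qed.

Lemma solZ n m (A : 'M[R]_n) B C (D : 'M[R]_m) (c : R) x :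
  spectral_norm D < 1 -> 0 < c -> is_solution A B C D x ->
  is_solution A B C D (fun t => c *: x t).
Proof.
move=> hs hc [hx hd]; split.
  move=> t; exact: (continuousZr (hx t)).
move=> t ht; rewrite fieldZ //; exact: (is_deriveZ c (hd t ht)).
Qed.

End Main2.

Theorem theorem1 (R : realType) (n m : nat) (A : 'M[R]_n) (B : 'M[R]_(n, m))
  (C : 'M[R]_(m, n)) (D : 'M[R]_m) :
  hurwitz A -> spectral_norm D < 1 ->
  (GAS A B C D <-> LAS A B C D).
Proof.
move=> _ hs; split.
  move=> [ls ga]; split => //; exists 1 => // x hx _; exact: ga.
move=> [ls [d dpos la]]; split => // x hx.
set e := enorm (x 0).
have e0 : 0 <= e by apply: enorm_ge0.
set c := d / (2 * (e + 1)).
have hc2 : c * (2 * (e + 1)) = d by rewrite /c mulfVK // gt_eqF //; lra.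
have hc : 0 < c by rewrite /c divr_gt0 //; lra.
have hce : c * e < d by nra.
have H := la _ (@solZ R _ _ A B C D c x hs hc hx).
have := H; rewrite enormZ ger0_norm ?ltW // => /(_ hce) H2.
have H3 := cvgZr (k := c^-1) H2.
rewrite scaler0 in H3.
have E : x = (c^-1 \*: (fun t => c *: x t)).
  by apply/funext => t; rewrite /= scalerA mulVf ?scale1r // gt_eqF.
rewrite E; exact: H3.
Qed.
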